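(* Fix $s,\mu>0$ and let $f_{s,\mu}$ be the repressilator vector field $\dot x=\frac{\mu}{1+y^s}-x$, $\dot y=\frac{\mu}{1+z^s}-y$, $\dot z=\frac{\mu}{1+x^s}-z$ on the closed positive orthant $\mathbb{R}^3_+=\{x,y,z\ge0\}$. Then $d\theta(f_{s,\mu})>0$ on $\mathbb{R}^3_+\setminus\Delta$.
   Context: $\Delta:=\mathrm{span}\{(1,1,1)\}\subset\mathbb{R}^3$ is the diagonal. For $\mathbf{x}=(x,y,z)$, $\mathbf{x}_\perp$ denotes the orthogonal projection of $\mathbf{x}$ onto $\Delta^\perp$, so $\|\mathbf{x}_\perp\|^2=\tfrac23(x^2+y^2+z^2-xy-yz-zx)$. The closed 1-form $d\theta$ on $\mathbb{R}^3\setminus\Delta$ is $$d\theta:=\frac{1}{\sqrt3}\,\frac{(z-y)\,dx+(x-z)\,dy+(y-x)\,dz}{\|\mathbf{x}_\perp\|^2}.$$ *)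

(* Defs.v *)
From Stdlib Require Import Reals Lra.
Open Scope R_scope.

(* Real power x^s for x >= 0 and s > 0, with the convention 0^s = 0
   (Stdlib's Rpower 0 s is exp (s * ln 0) = 1, which is wrong here). *)
Definition rpow (x s : R) : R := if Rle_dec x 0 then 0 else Rpower x s.

Definition hill (s mu u : R) : R := mu / (1 + rpow u s).

Definition rep_fx (s mu x y z : R) : R := hill s mu y - x.
Definition rep_fy (s mu x y z : R) : R := hill s mu z - y.
Definition rep_fz (s mu x y z : R) : R := hill s mu x - z.

(* ||x_perp||^2 : squared norm of the projection onto the orthogonal
   complement of the diagonal. *)
Definition perp_sq (x y z : R) : R :=
  2 / 3 * (x ^ 2 + y ^ 2 + z ^ 2 - x * y - y * z - z * x).

Definition dtheta (x y z vx vy vz : R) : R :=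
  / sqrt 3 * (((z - y) * vx + (x - z) * vy + (y - x) * vz) / perp_sq x y z).

Definition on_diagonal (x y z : R) : Prop := x = y /\ y = z.

(* Main.v *)
Require Import Defs.
From Stdlib Require Import Reals Lra Psatz.
Open Scope R_scope.

Lemma rpow_nonneg u s : 0 <= rpow u s.
Proof. unfold rpow; destruct (Rle_dec u 0); [lra|unfold Rpower; left; apply exp_pos]. Qed.

Lemma rpow_lt u v s : 0 < s -> 0 <= u -> u < v -> rpow u s < rpow v s.
Proof.
  intros hs hu huv; unfold rpow.
  destruct (Rle_dec v 0); [lra|].
  destruct (Rle_dec u 0).
  - unfold Rpower; apply exp_pos.
  - apply Rlt_Rpower_l; lra.
Qed.

Lemma hill_lt s mu u v : 0 < s -> 0 < mu -> 0 <= u -> u < v -> hill s mu v < hill s mu u.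
Proof.
  intros hs hmu hu huv; unfold hill.
  pose proof (rpow_lt u v s hs hu huv). pose proof (rpow_nonneg u s).
  unfold Rdiv; apply Rmult_lt_compat_l; auto.
  apply Rinv_lt_contravar; nra.
Qed.

Theorem lemma7 (s mu : R) (hs : 0 < s) (hmu : 0 < mu)
  (x y z : R) (hx : 0 <= x) (hy : 0 <= y) (hz : 0 <= z)
  (hnd : ~ on_diagonal x y z) :
  0 < dtheta x y z (rep_fx s mu x y z) (rep_fy s mu x y z) (rep_fz s mu x y z).
Proof.
  unfold dtheta, rep_fx, rep_fy, rep_fz.
  set (a := hill s mu x). set (b := hill s mu y). set (c := hill s mu z).
  assert (Hxy : x < y -> b < a) by (intro; apply hill_lt; auto).
  assert (Hyx : y < x -> a < b) by (intro; apply hill_lt; auto).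
  assert (Hxz : x < z -> c < a) by (intro; apply hill_lt; auto).
  assert (Hzx : z < x -> a < c) by (intro; apply hill_lt; auto).
  assert (Hyz : y < z -> c < b) by (intro; apply hill_lt; auto).
  assert (Hzy : z < y -> b < c) by (intro; apply hill_lt; auto).
  assert (Hp : 0 < perp_sq x y z).
  { unfold perp_sq, on_diagonal in *.
    destruct (Req_dec x y); destruct (Req_dec y z); subst; try tauto; nra. }
  assert (HN : 0 < (z - y) * (b - x) + (x - z) * (c - y) + (y - x) * (a - z)).
  { unfold on_diagonal in hnd.
    destruct (Rtotal_order x y) as [h1|[h1|h1]];
    destruct (Rtotal_order y z) as [h2|[h2|h2]];
    destruct (Rtotal_order x z) as [h3|[h3|h3]]; subst; try tauto; try lra;
    repeat match goal with H : ?p -> _ < _ |- _ =>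
      first [ specialize (H ltac:(lra)) | clear H ] end; nra. }
  assert (0 < sqrt 3) by (apply sqrt_lt_R0; lra).
  apply Rmult_lt_0_compat; [apply Rinv_0_lt_compat; auto|].
  unfold Rdiv; apply Rmult_lt_0_compat; auto. apply Rinv_0_lt_compat; auto.
Qed.
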